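(* (Working in $\mathbf{ZF}$.) Every weakly Hausdorff topologically compact generalized topological space is weakly normal.
   Context: A generalized topological space (gts) $(X,\mathrm{Op}_X,\mathrm{Cov}_X)$ is in the sense of Delfs–Knebusch: $\mathrm{Op}_X\subseteq\mathcal P(X)$ contains $\emptyset,X$ and is closed under finite unions and intersections, $\mathrm{Cov}_X$ is a collection of subfamilies of $\mathrm{Op}_X$ (admissible coverings) satisfying the Delfs–Knebusch axioms (finite families are admissible; unions of admissible families are open; admissible families restrict to open subsets of their union, are stable under admissible refinement and under coarsening with the same union; and a set whose traces on all members of an admissible family are open is open). $\mathrm{Cl}_X=\{X\setminus U:U\in\mathrm{Op}_X\}$. The topologization $X_{top}$ is $X$ with the topology generated by $\mathrm{Op}_X$. The gts is topologically compact if $X_{top}$ is compact, and weakly Hausdorff if $X_{top}$ is Hausdorff. It is weakly normal if for every disjoint $A_1,A_2\subseteq X$, each of which is a singleton or a member of $\mathrm{Cl}_X$, there exist disjoint $W_1,W_2\in\mathrm{Op}_X$ with $A_i\subseteq W_i$ ($i=1,2$). *)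

(* Defs.v *)
From HB Require Import structures.
From mathcomp Require Import all_boot.
From mathcomp Require Import boolp classical_sets cardinality.
Set Implicit Arguments. Unset Strict Implicit. Unset Printing Implicit Defensive.
Local Open Scope classical_set_scope.

(* Generalized topological space in the sense of Delfs–Knebusch,
   with families of subsets represented as sets of sets. *)
Record gts (X : Type) (Op : set (set X)) (Cov : set (set (set X))) : Prop := {
  gts_op0 : Op set0;
  gts_opT : Op setT;
  gts_opU : forall U V, Op U -> Op V -> Op (U `|` V);
  gts_opI : forall U V, Op U -> Op V -> Op (U `&` V);
  gts_cov_sub : forall U, Cov U -> U `<=` Op;
  gts_cov_fin : forall U, U `<=` Op -> finite_set U -> Cov U;
  gts_cov_open : forall U, Cov U -> Op (\bigcup_(W in U) W);
  gts_cov_restr : forall U V, Cov U -> Op V -> V `<=` \bigcup_(W in U) W ->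
      Cov [set V `&` W | W in U];
  gts_cov_refine : forall U (F : set X -> set (set X)), Cov U ->
      (forall W, U W -> Cov (F W) /\ \bigcup_(V in F W) V = W) ->
      Cov (\bigcup_(W in U) F W);
  gts_cov_coarsen : forall U V, U `<=` Op -> Cov V ->
      \bigcup_(W in U) W = \bigcup_(W in V) W ->
      (forall W, V W -> exists2 W', U W' & W `<=` W') -> Cov U;
  gts_cov_local : forall U V, Cov U -> V `<=` \bigcup_(W in U) W ->
      (forall W, U W -> Op (V `&` W)) -> Op V
}.

Definition Cl (X : Type) (Op : set (set X)) : set (set X) :=
  [set A | exists2 U, Op U & A = ~` U].

Definition is_topology (X : Type) (T : set (set X)) : Prop :=
  [/\ T set0, T setT,
      (forall U V, T U -> T V -> T (U `&` V)) &
      (forall F : set (set X), F `<=` T -> T (\bigcup_(W in F) W))].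

Definition top_open (X : Type) (Op : set (set X)) (A : set X) : Prop :=
  forall T : set (set X), is_topology T -> Op `<=` T -> T A.

Definition top_compact (X : Type) (Op : set (set X)) : Prop :=
  forall F : set (set X), F `<=` top_open Op -> \bigcup_(W in F) W = setT ->
    exists2 G : set (set X), G `<=` F & finite_set G /\ \bigcup_(W in G) W = setT.

Definition top_hausdorff (X : Type) (Op : set (set X)) : Prop :=
  forall x y : X, x <> y -> exists U V, [/\ top_open Op U, top_open Op V,
     U x, V y & U `&` V = set0].

Definition weakly_normal (X : Type) (Op : set (set X)) : Prop :=
  forall A1 A2 : set X,
    ((exists x, A1 = [set x]) \/ Cl Op A1) ->
    ((exists x, A2 = [set x]) \/ Cl Op A2) ->
    A1 `&` A2 = set0 ->
    exists W1 W2, [/\ Op W1, Op W2, W1 `&` W2 = set0, A1 `<=` W1 & A2 `<=` W2].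

(* Main.v *)
Require Import Defs.
From mathcomp Require Import all_boot.
From mathcomp Require Import finmap boolp classical_sets cardinality.
Local Open Scope classical_set_scope.

Lemma fin_union_closed (X : Type) (P : set (set X)) (G : set (set X)) :
  P set0 -> (forall U V, P U -> P V -> P (U `|` V)) ->
  finite_set G -> G `<=` P -> P (\bigcup_(W in G) W).
Proof.
move=> P0 PU /finite_fsetP [S ->] SP.
have : forall W, W \in (S : seq (set X)) -> P W by move=> W WS; apply: SP.
have -> : \bigcup_(W in [set` S]) W = \bigcup_(W in [set W | W \in (S : seq (set X))]) W by [].
elim: (S : seq (set X)) => [|a s IH] H.
  have -> : \bigcup_(W in [set W | W \in ([::] : seq (set X))]) W = set0.
    by apply/seteqP; split=> x //= [W].
  exact: P0.
have -> : \bigcup_(W in [set W | W \in a :: s]) W = a `|` \bigcup_(W in [set W | W \in s]) W.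
  apply/seteqP; split=> x /=.
    by move=> [W] /= ; rewrite in_cons => /orP[/eqP->|Ws] Wx; [left|right; exists W].
  by move=> [ax|[W Ws Wx]]; [exists a; rewrite /= ?in_cons ?eqxx|exists W; rewrite //= in_cons Ws orbT].
apply: PU; first by apply: H; rewrite in_cons eqxx.
by apply: IH => W Ws; apply: H; rewrite in_cons Ws orbT.
Qed.

Lemma op_top (X : Type) (Op : set (set X)) : Op `<=` top_open Op.
Proof. by move=> A OA T _ H; apply: H. Qed.

Lemma refine (X : Type) (Op : set (set X)) (Cov : set (set (set X))) A x :
  gts Op Cov -> top_open Op A -> A x -> exists2 B, Op B & B x /\ B `<=` A.
Proof.
move=> g tA; move: x; apply: (tA [set A | forall x, A x -> exists2 B, Op B & B x /\ B `<=` A]).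
- rewrite /is_topology; split => /=.
  + by [].
  + by move=> x _; exists setT => //; exact: gts_opT g.
  + move=> U V HU HV x [Ux Vx].
    have [B1 OB1 [B1x B1U]] := HU x Ux; have [B2 OB2 [B2x B2V]] := HV x Vx.
    exists (B1 `&` B2); first exact: (gts_opI g).
    by split => // y [y1 y2]; split; [apply: B1U|apply: B2V].
  + move=> F FT x [W FW Wx]; have [B OB [Bx BW]] := FT W FW x Wx.
    by exists B => //; split => // y By; exists W => //; apply: BW.
- by move=> U OU x Ux /=; exists U => //; split.
Qed.

Lemma cover (X : Type) (Op : set (set X)) (Cov : set (set (set X))) (P : set (set X)) (A : set X) :
  gts Op Cov -> top_compact Op -> P `<=` Op -> P set0 ->
  (forall U V, P U -> P V -> P (U `|` V)) ->
  ((exists x, A = [set x]) \/ Cl Op A) ->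
  (forall z, A z -> exists2 W, P W & W z) -> exists2 W, P W & A `<=` W.
Proof.
move=> g cpt POp P0 PU [[x ->]|[U OU ->]] H.
  by have [W PW Wx] := H x erefl; exists W => // y ->.
have Fop : ([set U] `|` P) `<=` top_open Op.
  by move=> W [->|PW]; apply: op_top => //; apply: POp.
have [|G GF [finG GT]] := cpt _ Fop.
  apply/seteqP; split => // z _.
  have [Uz|nUz] := pselect (U z); first by exists U => //; left.
  by have [W PW Wz] := H z nUz; exists W => //; right.
exists (\bigcup_(W in G `&` P) W).
  apply: fin_union_closed => //. all: try exact: finite_setIl. all: try by move=> W [].
move=> z nUz; have : (\bigcup_(W in G) W) z by rewrite GT.
move=> [W GW Wz]; exists W => //; split => //.
by case: (GF W GW) => // WU; rewrite WU in Wz.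
Qed.

Theorem proposition3p15 (X : Type) (Op : set (set X)) (Cov : set (set (set X))) :
  gts Op Cov -> top_hausdorff Op -> top_compact Op -> weakly_normal Op.
Proof.
move=> g haus cpt A1 A2 H1 H2 dis.
have step1 : forall x, A1 x -> exists2 B,
    (Op B /\ exists2 U', Op U' & U' x /\ U' `&` B = set0) & A2 `<=` B.
  move=> x A1x.
  apply: (@cover _ _ _ (fun B => Op B /\ exists2 U', Op U' & U' x /\ U' `&` B = set0) _ g cpt) => //.
  - by move=> B [].
  - split; first exact: (gts_op0 g).
    by exists setT; [exact: (gts_opT g)|split => //; rewrite setI0].
  - move=> U V [OU [U1 OU1 [U1x U1U]]] [OV [V1 OV1 [V1x V1V]]]; split; first exact: (gts_opU g).
    exists (U1 `&` V1); first exact: (gts_opI g).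
    split => //; apply/seteqP; split => // y [[y1 y2] [yU|yV]].
      by have : (U1 `&` U) y by []; rewrite U1U.
    by have : (V1 `&` V) y by []; rewrite V1V.
  - move=> z A2z.
    have xz : x <> z.
      move=> exz; rewrite -exz in A2z.
      by have : (A1 `&` A2) x by []; rewrite dis.
    have [U [V [tU tV Ux Vz UV]]] := haus x z xz.
    have [B1 OB1 [B1x B1U]] := @refine _ _ _ _ _ g tU Ux.
    have [B2 OB2 [B2z B2V]] := @refine _ _ _ _ _ g tV Vz.
    exists B2 => //; split => //; exists B1 => //; split => //.
    apply/seteqP; split => // y [y1 y2].
    have : (U `&` V) y by split; [apply: B1U|apply: B2V].
    by rewrite UV.
have [W1 [OW1 [W2 OW2 [A2W2 W12]]] A1W1] : exists2 W1,
    (Op W1 /\ exists2 W2, Op W2 & A2 `<=` W2 /\ W1 `&` W2 = set0) & A1 `<=` W1.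
  apply: (@cover _ _ _ (fun W1 => Op W1 /\ exists2 W2, Op W2 & A2 `<=` W2 /\ W1 `&` W2 = set0) _ g cpt) => //.
  - by move=> B [].
  - split; first exact: (gts_op0 g).
    by exists setT; [exact: (gts_opT g)|split => //; rewrite set0I].
  - move=> U V [OU [U1 OU1 [U1x U1U]]] [OV [V1 OV1 [V1x V1V]]]; split; first exact: (gts_opU g).
    exists (U1 `&` V1); first exact: (gts_opI g).
    split; first by move=> y Ay; split; [apply: U1x|apply: V1x].
    apply/seteqP; split => // y [[yU|yV] [y1 y2]].
      by have : (U `&` U1) y by []; rewrite U1U.
    by have : (V `&` V1) y by []; rewrite V1V.
  - move=> z A1z.
    have [B [OB [U' OU' [U'z U'B]]] A2B] := step1 z A1z.
    by exists U' => //; split => //; exists B => //; split => //; rewrite setIC.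
by exists W1, W2; split.
Qed.
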